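(* Let $\Omega$ be a finite set of $n$ items, let $k,l\ge 1$ be integers, and let $f_1,\dots,f_m:2^\Omega\to\mathbb{R}_{\ge 0}$ be monotone non-decreasing submodular functions. Then the algorithm $\textsf{Sampling-Greedy}$ returns a random set $S\subseteq\Omega$ with $|S|\le l$ such that $$\mathbb{E}_S[F(S)]\;\ge\;\frac{1-1/e^2}{2}\,F(O),$$ where $O\in\arg\max_{S'\subseteq\Omega,\ |S'|\le l}F(S')$.
   Context: Define $F(S)=\sum_{i=1}^m\max_{A\subseteq S,\ |A|\le k} f_i(A)$. Submodularity of $f_i$: $f_i(A\cup\{x\})-f_i(A)\ge f_i(A'\cup\{x\})-f_i(A')$ for $A\subseteq A'$, $x\notin A'$. Notation: add a set $\Phi$ of $l$ dummy items and let $\Omega'=\Omega\cup\Phi$; extend each $f_i$ by $f_i(A)=f_i(A\cap\Omega)$ for $A\subseteq\Omega'$. Let $\Delta_i(x,A)=f_i(A\cup\{x\})-f_i(A)$; for $y\in A$, $\nabla_i(x,y,A)=f_i((A\setminus\{y\})\cup\{x\})-f_i(A)$; for $|A|\le k$: $\nabla_i(x,A)=0$ if $x\in A$; $\nabla_i(x,A)=\max\{0,\max_{y\in A}\nabla_i(x,y,A),\Delta_i(x,A)\}$ if $x\notin A$, $|A|<k$; $\nabla_i(x,A)=\max\{0,\max_{y\in A}\nabla_i(x,y,A)\}$ if $x\notin A$, $|A|=k$. Define $\textsf{Rep}_i(x,A)$ to be $\emptyset$ if $\nabla_i(x,A)=0$, or if $\nabla_i(x,A)>0$, $|A|<k$ and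 $\max_{y\in A}\nabla_i(x,y,A)<\Delta_i(x,A)$; otherwise it is $\{y^*\}$ for some $y^*\in\arg\max_{y\in A}\nabla_i(x,y,A)$. $\textsf{Trim}(B,f_i)$: start with $A\leftarrow B$, go once through the elements of $B$ in a fixed order and remove an element $x$ currently in $A$ whenever $f_i(A)-f_i(A\setminus\{x\})<0$; return $A$. $\textsf{Sampling-Greedy}$: initialize $S\leftarrow\emptyset$ and $T_i\leftarrow\emptyset$ for all $i\in[m]$. Repeat $l$ times: let $M$ be a set of exactly $l$ items of $\Omega'$ maximizing $\sum_{x\in M}\sum_{i=1}^m\nabla_i(x,T_i)$; pick $x^*$ uniformly at random from $M$ and set $S\leftarrow S\cup\{x^*\}$; for each $i\in[m]$ with $\nabla_i(x^*,T_i)>0$, set $T_i\leftarrow (T_i\setminus\textsf{Rep}_i(x^*,T_i))\cup\{x^*\}$ and then $T_i\leftarrow\textsf{Trim}(T_i,f_i)$. Finally output $S$ with dummy items removed (i.e. $S\cap\Omega$). *)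

(* Defs.v *)
From HB Require Import structures.
From mathcomp Require Import all_boot all_order all_algebra.
From mathcomp Require Import reals sequences exp.
Set Implicit Arguments. Unset Strict Implicit. Unset Printing Implicit Defensive.
Import Order.TTheory GRing.Theory Num.Theory.
Local Open Scope ring_scope.

Section SamplingGreedy.
Variable R : realType.
Variable T : finType.
Variables (m k l : nat).
Variable f : 'I_m -> {set T} -> R.

(* Omega' = Omega u Phi, Phi = l dummy items *)
Notation Om' := (T + 'I_l)%type.

Definition realpart (A : {set Om'}) : {set T} := [set x | inl x \in A].

Definition fe (i : 'I_m) (A : {set Om'}) : R := f i (realpart A).

(* F(S) = sum_i max_{A subset S, |A| <= k} f_i(A)   (f_i >= 0, so seeding the
   max with 0 is harmless; the empty set is always a candidate) *)
Definition Fobj (S : {set T}) : R :=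
  \sum_(i < m) \big[Num.max/0]_(A : {set T} | (A \subset S) && (#|A| <= k)%N) f i A.

Definition Delta (i : 'I_m) (x : Om') (A : {set Om'}) : R := fe i (x |: A) - fe i A.
Definition nablaxy (i : 'I_m) (x y : Om') (A : {set Om'}) : R :=
  fe i (x |: (A :\ y)) - fe i A.
(* max over y in A of nabla_i(x,y,A) (seeded with 0; only used inside max{0,..}
   or compared against Delta, where the seed is harmless) *)
Definition maxnxy (i : 'I_m) (x : Om') (A : {set Om'}) : R :=
  \big[Num.max/0]_(y in A) nablaxy i x y A.
Definition nabla (i : 'I_m) (x : Om') (A : {set Om'}) : R :=
  if x \in A then 0
  else if (#|A| < k)%N then Num.max 0 (Num.max (maxnxy i x A) (Delta i x A))
  else Num.max 0 (maxnxy i x A).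

(* tie-breaking rule choosing some y* in argmax_{y in A} nabla_i(x,y,A) *)
Variable chRep : 'I_m -> Om' -> {set Om'} -> Om'.
Definition Rep (i : 'I_m) (x : Om') (A : {set Om'}) : {set Om'} :=
  if nabla i x A == 0 then set0
  else if (#|A| < k)%N && (maxnxy i x A < Delta i x A) then set0
  else [set chRep i x A].

Variable ord : seq Om'.
Definition Trim (B : {set Om'}) (i : 'I_m) : {set Om'} :=
  foldl (fun (A : {set Om'}) (x : Om') => if (x \in B) && (x \in A) && (fe i A - fe i (A :\ x) < 0)
                    then A :\ x else A) B ord.

Definition score (Ts : 'I_m -> {set Om'}) (M : {set Om'}) : R :=
  \sum_(x in M) \sum_(i < m) nabla i x (Ts i).

Definition updT (Ts : 'I_m -> {set Om'}) (x : Om') : 'I_m -> {set Om'} :=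
  fun i => if 0 < nabla i x (Ts i)
           then Trim (x |: (Ts i :\: Rep i x (Ts i))) i
           else Ts i.

(* tie-breaking rule choosing a maximizing set M of exactly l items, as a
   function of the iteration index and the current state (S, T_1..T_m) *)
Variable chM : nat -> {set Om'} -> ('I_m -> {set Om'}) -> {set Om'}.

(* Each iteration picks
   uniformly among the l elements of M, so every leaf has probability (1/l)^l;
   the output distribution is the uniform distribution on this list. *)
Fixpoint leaves (r t : nat) (S : {set Om'}) (Ts : 'I_m -> {set Om'})
  : seq {set Om'} :=
  match r with
  | 0 => [:: S]
  | r'.+1 => flatten [seq leaves r' t.+1 (x |: S) (updT Ts x)
                     | x <- enum (chM t S Ts)]
  end.

Definition outputs : seq {set T} :=
  [seq realpart X | X <- leaves l 0 set0 (fun _ => set0)].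

Definition expectedF : R :=
  (\sum_(X <- outputs) Fobj X) / (size outputs)%:R.

End SamplingGreedy.

Definition submodular (T : finType) (R : realType) (g : {set T} -> R) : Prop :=
  forall (A A' : {set T}) (x : T), A \subset A' -> x \notin A' ->
    g (x |: A) - g A >= g (x |: A') - g A'.

(* Main.v *)
Require Import Defs.
From HB Require Import structures.
From mathcomp Require Import all_boot all_order all_algebra.
From mathcomp Require Import reals sequences exp.
Import Order.TTheory GRing.Theory Num.Theory.
Local Open Scope ring_scope.
Set Implicit Arguments. Unset Strict Implicit. Unset Printing Implicit Defensive.

Section BigMax.
Variable R : realType.

Lemma bm_ge_seed (I : Type) (s : seq I) (P : pred I) (F : I -> R) (x0 : R) :
  x0 <= \big[Num.max/x0]_(i <- s | P i) F i.
Proof.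
elim: s => [|a s IH]; first by rewrite big_nil.
rewrite big_cons; case: (P a) => //; by rewrite le_max IH orbT.
Qed.

Lemma bm_ge_term (I : eqType) (s : seq I) (P : pred I) (F : I -> R) (x0 : R) j :
  j \in s -> P j -> F j <= \big[Num.max/x0]_(i <- s | P i) F i.
Proof.
elim: s => [//|a s IH]; rewrite inE big_cons => /orP [/eqP ->|js] Pj.
  by rewrite Pj le_max lexx.
case: (P a); last exact: IH.
by rewrite le_max IH ?orbT.
Qed.

Lemma bm_att (I : eqType) (s : seq I) (P : pred I) (F : I -> R) (x0 : R) :
  \big[Num.max/x0]_(i <- s | P i) F i <= x0 \/
  exists2 j, (j \in s) && P j & \big[Num.max/x0]_(i <- s | P i) F i <= F j.
Proof.
elim: s => [|a s IH]; first by left; rewrite big_nil.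
rewrite big_cons; case Pa: (P a); last first.
  case: IH => [|[j /andP[js Pj] H]]; first by left.
  by right; exists j; rewrite ?inE ?js ?orbT.
case: (leP (F a) (\big[Num.max/x0]_(i <- s | P i) F i)) => Hle.
  case: IH => [|[j /andP[js Pj] H]]; first by left.
  by right; exists j; rewrite ?inE ?js ?orbT.
by right; exists a; rewrite ?inE ?eqxx ?Pa.
Qed.

End BigMax.

Section Comb.
Variables (R : realType) (U : finType) (g : {set U} -> R).
Hypothesis gmono : forall A B : {set U}, A \subset B -> g A <= g B.
Hypothesis gsub : forall (A A' : {set U}) (x : U), A \subset A' -> x \notin A' ->
    g (x |: A') - g A' <= g (x |: A) - g A.

Lemma sum_nat_ind (P : {set U} -> Prop) :
  P set0 -> (forall (D : {set U}) o, o \in D -> P (D :\ o) -> P D) -> forall D, P D.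
Proof.
move=> P0 Ps D; have [n HD] : exists n, #|D| = n by eexists.
elim: n D HD => [|n IH] D HD.
  have : #|D| == 0%N by rewrite HD.
  by rewrite cards_eq0 => /eqP ->.
have: (0 < #|D|)%N by rewrite HD.
rewrite card_gt0 => /set0Pn [o oD]; apply: (Ps D o oD); apply: IH.
by move: HD; rewrite (cardsD1 o) oD add1n => -[].
Qed.

Lemma L1 (A D : {set U}) : [disjoint D & A] ->
  g (A :|: D) - g A <= \sum_(o in D) (g (o |: A) - g A).
Proof.
move: D; apply: sum_nat_ind.
  by move=> _; rewrite big_set0 setU0 subrr.
move=> D o oD IH dis.
have dis' : [disjoint D :\ o & A].
  by apply: disjointWl dis; apply: subD1set.
rewrite (big_setD1 o oD) /=.
have -> : A :|: D = o |: (A :|: D :\ o).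
  by rewrite setUCA setD1K.
have oA : o \notin A by rewrite (disjointFr dis).
have H1 := gsub (A := A) (A' := A :|: D :\ o) (x := o) (subsetUl _ _).
rewrite !inE eqxx (negbTE oA) /= in H1.
have := IH dis'; move: (H1 isT).
set a := g _; set b := g _; set c := g _; set d := g _; set e := \sum_(_ in _) _.
move=> h1 h2.
have -> : a - d = (a - b) + (b - d) by rewrite addrA subrK.
exact: lerD.
Qed.

Lemma L2 (A C : {set U}) : C \subset A ->
  \sum_(y in C) (g A - g (A :\ y)) <= g A - g (A :\: C).
Proof.
move: C; apply: sum_nat_ind.
  by move=> _; rewrite big_set0 setD0 subrr.
move=> C o oC IH sCA.
have oA : o \in A by apply: (subsetP sCA).
rewrite (big_setD1 o oC) /=.
have := IH (subset_trans (subD1set C o) sCA).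
have E : A :\: (C :\ o) = o |: (A :\: C).
  apply/setP => z; rewrite !inE; case: (eqVneq z o) => [->|] /=; by rewrite ?oA ?oC.
rewrite E => h.
have H1 := gsub (A := A :\: C) (A' := A :\ o) (x := o).
have s1 : A :\: C \subset A :\ o.
  apply/subsetP => z; rewrite !inE => /andP [zC zA]; rewrite zA andbT.
  by apply: contraNneq zC => ->.
rewrite setD1K // !inE eqxx /= in H1; have h1 := H1 s1 isT.
set a := g A in h h1 *; set b := g (A :\: C) in h h1 *.
set c := g (o |: _) in h h1 *; set d := g (A :\ o) in h h1 *.
have -> : a - b = (a - c) + (c - b) by rewrite addrA subrK.
by rewrite addrC; apply: lerD.
Qed.

Lemma L3 (A : {set U}) (s D h : U -> R) :
  (forall y, y \in A -> 0 <= h y) ->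
  forall (D0 : {set U}),
  (forall o y, o \in D0 -> y \in A -> D o - h y <= s o) ->
  forall A' : {set U}, A' \subset A -> (#|D0| <= #|A'|)%N ->
  \sum_(o in D0) D o - \sum_(y in A') h y <= \sum_(o in D0) s o.
Proof.
move=> h0; apply: sum_nat_ind.
  move=> _ A' sA' _; rewrite !big_set0 sub0r oppr_le0.
  by apply: sumr_ge0 => y yA; apply: h0; apply: (subsetP sA').
move=> D0 o oD IH Hs A' sA' cD.
have: (0 < #|A'|)%N.
  by apply: leq_trans cD; rewrite card_gt0; apply/set0Pn; exists o.
rewrite card_gt0 => /set0Pn [y yA'].
have yA : y \in A by apply: (subsetP sA').
rewrite (big_setD1 o oD) (big_setD1 o oD) (big_setD1 y yA') /=.
have IH' := IH (fun o' y' o'D y'A => Hs o' y' (subsetP (subD1set D0 o) o' o'D) y'A)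
  (A' :\ y) (subset_trans (subD1set A' y) sA').
have c' : (#|D0 :\ o| <= #|A' :\ y|)%N.
  by move: cD; rewrite (cardsD1 o D0) (cardsD1 y A') oD yA'.
have := IH' c'; have := Hs o y oD yA => h1 h2.
have -> : D o + \sum_(i in D0 :\ o) D i - (h y + \sum_(i in A' :\ y) h i)
  = (D o - h y) + (\sum_(i in D0 :\ o) D i - \sum_(i in A' :\ y) h i).
  by rewrite opprD !addrA; congr (_ + _); rewrite -!addrA; congr (_ + _); rewrite addrC.
exact: lerD.
Qed.

End Comb.

From mathcomp Require Import ring lra zify.

Section Main.
Variables (R : realType) (T : finType) (m k l : nat) (f : 'I_m -> {set T} -> R).
Hypothesis kpos : (0 < k)%N.
Hypothesis f0 : forall i A, 0 <= f i A.
Hypothesis fmono : forall i (A B : {set T}), A \subset B -> f i A <= f i B.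
Hypothesis fsub : forall i, submodular (f i).
Local Notation U := (T + 'I_l)%type.

Lemma realpart_mono (A B : {set U}) : A \subset B -> realpart A \subset realpart B.
Proof. by move=> sAB; apply/subsetP => z; rewrite !inE; apply: (subsetP sAB). Qed.

Lemma fe_mono i (A B : {set U}) : A \subset B -> fe f i A <= fe f i B.
Proof. by move=> sAB; apply: fmono; apply: realpart_mono. Qed.

Lemma fe_ge0 i (A : {set U}) : 0 <= fe f i A.
Proof. exact: f0. Qed.

Lemma fe_sub i (A A' : {set U}) (x : U) : A \subset A' -> x \notin A' ->
  fe f i (x |: A') - fe f i A' <= fe f i (x |: A) - fe f i A.
Proof.
case: x => [t|j] sAA' xA'.
  have E : forall X : {set U}, realpart (inl t |: X) = t |: realpart X.
    by move=> X; apply/setP => z; rewrite !inE.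
  rewrite /fe !E; apply: fsub; first exact: realpart_mono.
  by rewrite inE.
have E : forall X : {set U}, realpart (inr j |: X) = realpart X.
  by move=> X; apply/setP => z; rewrite !inE.
by rewrite /fe !E !subrr.
Qed.

Lemma realpart_inl (X : {set T}) : realpart (inl @: X : {set U}) = X.
Proof.
apply/setP => z; rewrite inE; apply/imsetP/idP => [[y yX [->]] //|zX].
by exists z.
Qed.

Lemma card_realpart (X : {set U}) : (#|realpart X| <= #|X|)%N.
Proof.
have <- : #|(inl @: realpart X : {set U})| = #|realpart X|.
  by apply: card_imset => a b [].
apply: subset_leq_card; apply/subsetP => z /imsetP [y]; rewrite inE => yX ->.
done.
Qed.

Section Nab.
Variables (i : 'I_m) (x : U) (A : {set U}).

Lemma maxnxy_ge0 : 0 <= maxnxy f i x A.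
Proof. exact: bm_ge_seed. Qed.

Lemma nabla_ge0 : 0 <= nabla k f i x A.
Proof. by rewrite /nabla; case: ifP => // _; case: ifP => _; rewrite le_max lexx. Qed.

Lemma nabla_in : x \in A -> nabla k f i x A = 0.
Proof. by rewrite /nabla => ->. Qed.

Lemma nabla_ge_Delta : x \notin A -> (#|A| < k)%N -> Delta f i x A <= nabla k f i x A.
Proof.
by rewrite /nabla => /negbTE -> ->; rewrite le_max; apply/orP; right;
  rewrite le_max lexx orbT.
Qed.

Lemma nabla_ge_xy y : x \notin A -> y \in A -> nablaxy f i x y A <= nabla k f i x A.
Proof.
move=> /negbTE xA yA; have H : nablaxy f i x y A <= maxnxy f i x A.
  by apply: (@bm_ge_term _ _ _ (fun y => y \in A) (fun y => nablaxy f i x y A) 0 y) => //; rewrite mem_index_enum.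
rewrite /nabla xA; case: ifP => _; rewrite le_max; apply/orP; right => //.
by rewrite le_max H.
Qed.

Lemma nablaxy_ge y : y \in A -> x \notin A ->
  Delta f i x A - (fe f i A - fe f i (A :\ y)) <= nablaxy f i x y A.
Proof.
move=> yA xA; have := fe_sub i (subD1set A y) xA.
rewrite /Delta /nablaxy => h; lra.
Qed.

End Nab.

Lemma nabla_sum i (A B : {set U}) : (#|A| <= k)%N -> (#|B| <= k)%N ->
  fe f i B - 2 * fe f i A <= \sum_(o in B) nabla k f i o A.
Proof.
move=> cA cB.
have step1 : \sum_(o in B :\: A) nabla k f i o A <= \sum_(o in B) nabla k f i o A.
  rewrite [X in _ <= X](big_setID A) /= lerDr; apply: sumr_ge0 => o _; exact: nabla_ge0.
have dis : [disjoint B :\: A & A].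
  by rewrite disjoints_subset; apply/subsetP => z; rewrite !inE => /andP [->].
have hU : fe f i B <= fe f i (A :|: (B :\: A)).
  apply: fe_mono; apply/subsetP => z zB; rewrite !inE zB; by case: (z \in A).
have hL1 := L1 (g := fe f i) (@fe_sub i) dis.
have hA := fe_ge0 i A.
case: (ltnP #|A| k) => cAk.
  have : \sum_(o in B :\: A) (fe f i (o |: A) - fe f i A) <= \sum_(o in B :\: A) nabla k f i o A.
    apply: ler_sum => o; rewrite inE => /andP [oA _]; exact: nabla_ge_Delta.
  lra.
have h0 : forall y, y \in A -> 0 <= fe f i A - fe f i (A :\ y).
  by move=> y _; rewrite subr_ge0; apply: fe_mono; apply: subD1set.
have Hs : forall o y, o \in B :\: A -> y \in A ->
    Delta f i o A - (fe f i A - fe f i (A :\ y)) <= nabla k f i o A.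
  move=> o y; rewrite inE => /andP [oA _] yA.
  apply: le_trans (nablaxy_ge i yA oA) _; exact: nabla_ge_xy.
have cD : (#|B :\: A| <= #|A|)%N.
  by apply: leq_trans (subset_leq_card (subsetDl B A)) (leq_trans cB cAk).
have hL3 := L3 (s := fun o => nabla k f i o A) (D := fun o => Delta f i o A) h0 Hs (subxx A) cD.
have hL2 := L2 (g := fe f i) (@fe_sub i) (subxx A).
have hAA := fe_ge0 i (A :\: A).
rewrite /= in hL3.
rewrite /Delta in hL3.
lra.
Qed.

Lemma sum_sub (I : finType) (F : I -> R) (B C : {set I}) :
  (forall x, x \in C -> 0 <= F x) -> B \subset C ->
  \sum_(x in B) F x <= \sum_(x in C) F x.
Proof.
move=> F0 sBC; rewrite [X in _ <= X](big_setID B) /= (setIidPr sBC) lerDl.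
by apply: sumr_ge0 => x; rewrite inE => /andP [_ /F0].
Qed.

Lemma extend_set (I : finType) (X : {set I}) (n : nat) :
  (#|X| <= n)%N -> (n <= #|I|)%N -> exists M : {set I}, #|M| = n /\ X \subset M.
Proof.
move=> h1 h2; have [d Hd] : exists d, (n - #|X|)%N = d by eexists.
elim: d X h1 Hd => [|d IH] X h1 Hd.
  by exists X; split => //; lia.
have : ~~ ([set: I] \subset X).
  apply/negP => sTX; have := subset_leq_card sTX; rewrite cardsT => h3; lia.
move=> /subsetPn [z _ zX].
have [M [cM sM]] : exists M : {set I}, #|M| = n /\ z |: X \subset M.
  by apply: IH; rewrite cardsU1 zX add1n; lia.
by exists M; split => //; apply: subset_trans sM; apply: subsetU1.
Qed.

Variable chRep : 'I_m -> U -> {set U} -> U.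
Variable ord : seq U.
Variable chM : nat -> {set U} -> ('I_m -> {set U}) -> {set U}.
Hypothesis chRep_spec : forall (i : 'I_m) (x y : U) (A : {set U}), y \in A ->
     chRep i x A \in A /\ nablaxy f i x y A <= nablaxy f i x (chRep i x A) A.
Hypothesis chM_spec : forall (t : nat) (S : {set U}) (Ts : 'I_m -> {set U}),
  #|chM t S Ts| = l /\
     forall M : {set U}, #|M| = l -> score k f Ts M <= score k f Ts (chM t S Ts).

Lemma Trim_id B i : Trim f ord B i = B.
Proof.
rewrite /Trim.
have H : forall (A0 : {set U}) s, foldl (fun (A : {set U}) (x : U) =>
   if (x \in B) && (x \in A) && (fe f i A - fe f i (A :\ x) < 0) then A :\ x else A) A0 s = A0.
  move=> A0 s; elim: s A0 => //= x s IH A0; rewrite ifN ?IH //.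
  by rewrite ltNge subr_ge0 fe_mono ?subD1set ?andbF.
exact: H.
Qed.


Lemma upd_spec (Ts : 'I_m -> {set U}) (S : {set U}) x i : Ts i \subset S -> (#|Ts i| <= k)%N ->
  [/\ fe f i (updT k f chRep ord Ts x i) = fe f i (Ts i) + nabla k f i x (Ts i),
      updT k f chRep ord Ts x i \subset x |: S &
      (#|updT k f chRep ord Ts x i| <= k)%N].
Proof.
move=> sAS cA; rewrite /updT; set A := Ts i in sAS cA *.
have n0 := nabla_ge0 i x A.
case: ifP => hpos; last first.
  have -> : nabla k f i x A = 0.
    by apply/eqP; rewrite eq_le n0 andbT leNgt hpos.
  by split; rewrite ?addr0 //; apply: subset_trans sAS (subsetU1 x S).
rewrite Trim_id.
have xA : x \notin A.
  by apply/negP => xA; move: hpos; rewrite nabla_in // ltxx.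
have mx0 := maxnxy_ge0 i x A.
rewrite /Rep (negbTE (lt0r_neq0 hpos)).
case: ifP => hc.
  move/andP: hc => [cAk mxD]; rewrite setD0.
  have -> : nabla k f i x A = Delta f i x A.
    rewrite /nabla (negbTE xA) cAk (max_r (ltW mxD)) max_r //.
    exact: le_trans mx0 (ltW mxD).
  split.
  - by rewrite /Delta addrC subrK.
  - exact: setUS.
  - by rewrite cardsU1 xA add1n.
have Hmx : nabla k f i x A = maxnxy f i x A.
  rewrite /nabla (negbTE xA); case: ifP => cAk; last by rewrite max_r.
  rewrite cAk /= in hc; rewrite (@max_l _ _ (maxnxy f i x A)) ?max_r //.
  by rewrite leNgt hc.
have mxpos : 0 < maxnxy f i x A by rewrite -Hmx.
case: (bm_att (index_enum U) (fun y => y \in A) (fun y => nablaxy f i x y A) 0).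
  by rewrite -/(maxnxy f i x A) => h; move: mxpos; rewrite ltNge h.
move=> [y0 /andP [_ y0A]] hy0; rewrite -/(maxnxy f i x A) in hy0.
have [yA hy] := chRep_spec i x y0A.
set y := chRep i x A in yA hy *.
have hle : nablaxy f i x y A <= maxnxy f i x A.
  by apply: (@bm_ge_term _ _ _ (fun y => y \in A) (fun y => nablaxy f i x y A) 0 y) => //;
    rewrite mem_index_enum.
have Heq : nablaxy f i x y A = nabla k f i x A.
  by rewrite Hmx; apply/eqP; rewrite eq_le hle (le_trans hy0 hy).
split.
- by rewrite -Heq /nablaxy addrC subrK.
- by apply: setUS; apply: subset_trans sAS; apply: subD1set.
- rewrite cardsU1; move: cA; rewrite (cardsD1 y A) yA; by move=> h; apply: leq_trans h; rewrite leq_add2r leq_b1.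
Qed.

Definition Phi (Ts : 'I_m -> {set U}) : R := \sum_(i < m) fe f i (Ts i).
Definition Inv (S : {set U}) (Ts : 'I_m -> {set U}) : Prop :=
  forall i, Ts i \subset S /\ (#|Ts i| <= k)%N.

Lemma upd_Phi S Ts x : Inv S Ts ->
  Phi (updT k f chRep ord Ts x) = Phi Ts + \sum_(i < m) nabla k f i x (Ts i).
Proof.
move=> HI; rewrite /Phi -big_split /=; apply: eq_bigr => i _.
by have [sS cS] := HI i; have [-> _ _] := upd_spec x sS cS.
Qed.

Lemma upd_Inv S Ts x : Inv S Ts -> Inv (x |: S) (updT k f chRep ord Ts x).
Proof.
by move=> HI i; have [sS cS] := HI i; have [_ h1 h2] := upd_spec x sS cS.
Qed.

Lemma Phi_ge0 Ts : 0 <= Phi Ts.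
Proof. by apply: sumr_ge0 => i _; apply: fe_ge0. Qed.

Lemma Phi_le_F S Ts : Inv S Ts -> Phi Ts <= Fobj k f (realpart S).
Proof.
move=> HI; apply: ler_sum => i _; have [sS cS] := HI i.
apply: (@bm_ge_term _ _ _
  (fun A : {set T} => (A \subset realpart S) && (#|A| <= k)%N) (fun A => f i A) 0
  (realpart (Ts i))); first by rewrite mem_index_enum.
by rewrite realpart_mono //= (leq_trans (card_realpart _) cS).
Qed.


Lemma Fobj_ge0 (O : {set T}) : 0 <= Fobj k f O.
Proof. by apply: sumr_ge0 => i _; apply: bm_ge_seed. Qed.

Lemma score_lb (Ts : 'I_m -> {set U}) (O : {set T}) t S :
  (forall i, #|Ts i| <= k)%N -> (#|O| <= l)%N ->
  Fobj k f O - 2 * Phi Ts <= score k f Ts (chM t S Ts).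
Proof.
move=> cTs cO.
have cinl : forall X : {set T}, #|(inl @: X : {set U})| = #|X|.
  by move=> X; apply: card_imset => a b [].
have HM : forall (M : {set U}), 
  (forall x, x \in M -> 0 <= \sum_(i < m) nabla k f i x (Ts i)).
  by move=> M' x _; apply: sumr_ge0 => i _; apply: nabla_ge0.
case: (extend_set (X := (inl @: O : {set U})) (n := l)).
- by rewrite cinl.
- by rewrite card_sum card_ord leq_addl.
move=> M' [cM' sM'].
apply: le_trans (proj2 (chM_spec t S Ts) M' cM').
apply: le_trans (sum_sub (HM M') sM').
rewrite exchange_big /= /Fobj /Phi mulr_sumr -sumrB; apply: ler_sum => i _.
have [Oi [sOi cOi h]] : exists Oi : {set T}, [/\ Oi \subset O, (#|Oi| <= k)%N &
   \big[Num.max/0]_(A : {set T} | (A \subset O) && (#|A| <= k)%N) f i A <= f i Oi].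
  case: (bm_att (index_enum {set T}) (fun A : {set T} => (A \subset O) && (#|A| <= k)%N) (f i) 0).
    by move=> h; exists set0; rewrite sub0set cards0; split => //; apply: le_trans h (f0 _ _).
  by move=> [Oi /andP [_ /andP [s1 s2]] h]; exists Oi.
have cB : (#|(inl @: Oi : {set U})| <= k)%N by rewrite cinl.
have hn := nabla_sum i (cTs i) cB.
rewrite /fe realpart_inl in hn.
have hs : \sum_(o in (inl @: Oi : {set U})) nabla k f i o (Ts i) <=
          \sum_(o in (inl @: O : {set U})) nabla k f i o (Ts i).
  by apply: sum_sub; [move=> x _; apply: nabla_ge0 | apply: imsetS].
apply: le_trans hs; apply: le_trans hn; apply: lerD => //; exact: lexx.
Qed.

Lemma sum_leaves (F : {set U} -> R) r t S Ts :
  \sum_(X <- leaves k f chRep ord chM r.+1 t S Ts) F X =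
  \sum_(x in chM t S Ts) \sum_(X <- leaves k f chRep ord chM r t.+1 (x |: S) (updT k f chRep ord Ts x)) F X.
Proof. by rewrite /= big_flatten big_map big_enum. Qed.

Lemma size_leaves r t S Ts : size (leaves k f chRep ord chM r t S Ts) = (l ^ r)%N.
Proof.
elim: r t S Ts => [//|r IH] t S Ts /=.
rewrite size_flatten sumnE /shape big_map big_map big_enum /=.
rewrite (eq_bigr (fun _ => (l ^ r)%N)); last by move=> x _; rewrite IH.
by rewrite sum_nat_const (proj1 (chM_spec _ _ _)) expnS.
Qed.

Lemma card_leaves r t S Ts X : X \in leaves k f chRep ord chM r t S Ts -> (#|X| <= #|S| + r)%N.
Proof.
elim: r t S Ts => [|r IH] t S Ts /=.
  by rewrite inE => /eqP ->; rewrite addn0.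
move=> /flattenP [s /mapP [x _ ->] Xin].
have h := IH _ _ _ Xin.
have hS : (#|x |: S| <= #|S| + 1)%N by rewrite cardsU1 addnC leq_add2l leq_b1.
apply: (leq_trans h); rewrite addnS -addSn leq_add2r -addn1.
exact: hS.
Qed.

Lemma leaves_mono r t S Ts : Inv S Ts ->
  (l ^ r)%:R * Phi Ts <= \sum_(X <- leaves k f chRep ord chM r t S Ts) Fobj k f (realpart X).
Proof.
elim: r t S Ts => [|r IH] t S Ts HI.
  by rewrite big_seq1 expn0 mul1r; apply: Phi_le_F.
rewrite sum_leaves.
have h : \sum_(x in chM t S Ts) ((l ^ r)%:R * Phi Ts) <=
  \sum_(x in chM t S Ts) \sum_(X <- leaves k f chRep ord chM r t.+1 (x |: S) (updT k f chRep ord Ts x))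
     Fobj k f (realpart X).
  apply: ler_sum => x _; apply: le_trans (IH _ _ _ (upd_Inv x HI)).
  apply: ler_wpM2l; first by rewrite ler0n.
  rewrite (upd_Phi x HI) lerDl; apply: sumr_ge0 => i _; apply: nabla_ge0.
apply: le_trans h; rewrite sumr_const (proj1 (chM_spec _ _ _)).
by rewrite expnS natrM -mulrA mulr_natl.
Qed.


Lemma alg (K : realType) (L a c P Op : K) (n : nat) : L * c = L - 2 ->
  L ^+ n * L * (a * c * P + (1 - a * c) / 2 * Op) =
  L ^+ n * (a * (P * L + (Op - 2 * P)) + (1 - a) / 2 * Op * L).
Proof.
move=> Lc.
transitivity (L ^+ n * (a * (L * c) * P + (L - a * (L * c)) / 2 * Op)).
  ring.
rewrite Lc; field; lra.
Qed.

Definition cc : R := 1 - 2 / (l%:R).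

Lemma cc_ge0 r : (r < l)%N -> 0 <= cc ^+ r.
Proof.
move=> rl; case: (leqP 2 l) => hl.
  apply: exprn_ge0; rewrite /cc subr_ge0 ler_pdivrMr ?mul1r ?ler_nat //.
  by rewrite ltr0n; lia.
have -> : r = 0%N by lia.
by rewrite expr0.
Qed.

Lemma leaves_main (O : {set T}) r t S Ts : (0 < l)%N -> (#|O| <= l)%N -> Inv S Ts -> (r <= l)%N ->
  (l ^ r)%:R * (cc ^+ r * Phi Ts + (1 - cc ^+ r) / 2 * Fobj k f O)
    <= \sum_(X <- leaves k f chRep ord chM r t S Ts) Fobj k f (realpart X).
Proof.
move=> lpos cO; elim: r t S Ts => [|r IH] t S Ts HI rl.
  rewrite big_seq1 expn0 mul1r expr0 mul1r subrr !mul0r addr0; exact: Phi_le_F.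
rewrite sum_leaves.
set M := chM t S Ts; set a := cc ^+ r; set P := Phi Ts; set Op := Fobj k f O.
have a0 : 0 <= a by apply: cc_ge0.
have h1 : \sum_(x in M) ((l ^ r)%:R * (a * Phi (updT k f chRep ord Ts x) + (1 - a) / 2 * Op)) <=
  \sum_(x in M) \sum_(X <- leaves k f chRep ord chM r t.+1 (x |: S) (updT k f chRep ord Ts x))
     Fobj k f (realpart X).
  by apply: ler_sum => x _; apply: IH; [apply: upd_Inv | lia].
apply: le_trans h1.
have cM : #|M| = l by apply: (proj1 (chM_spec _ _ _)).
have h2 : \sum_(x in M) ((l ^ r)%:R * (a * Phi (updT k f chRep ord Ts x) + (1 - a) / 2 * Op))
   = (l ^ r)%:R * (a * (P *+ l + score k f Ts M) + ((1 - a) / 2 * Op) *+ l).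
  rewrite -mulr_sumr; congr (_ * _).
  under eq_bigr => x _ do rewrite (upd_Phi x HI).
  rewrite big_split /= -mulr_sumr big_split /= !sumr_const cM.
  by rewrite /score.
rewrite h2.
have cT : forall i, (#|Ts i| <= k)%N by move=> i; case: (HI i).
have h3 := score_lb t S cT cO.
have lr0 : (0 : R) < l%:R by rewrite ltr0n.
have E : (l ^ r.+1)%:R * (cc ^+ r.+1 * P + (1 - cc ^+ r.+1) / 2 * Op)
   = (l ^ r)%:R * (a * (P *+ l + (Op - 2 * P)) + ((1 - a) / 2 * Op) *+ l).
  have Lc : (l%:R : R) * cc = l%:R - 2.
    by rewrite /cc mulrBr mulr1 mulrCA divff ?mulr1 //; exact: lt0r_neq0.
  rewrite !natrX !exprSr -(mulr_natr P l) -(mulr_natr ((1 - a) / 2 * Op) l); exact: alg.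
rewrite E; apply: ler_wpM2l; first by rewrite ler0n.
rewrite lerD2r; apply: ler_wpM2l => //.
by rewrite lerD2l.
Qed.


Lemma fin1 (K : realType) (e Op P0 Sm : K) : 0 <= e -> 0 <= Op ->
  1 * (-1 * P0 + (1 - -1) / 2 * Op) <= Sm -> 1 * P0 <= Sm -> (1 - e) / 2 * Op * 1 <= Sm.
Proof. move=> e0 O0 h1 h2; have := mulr_ge0 e0 O0; lra. Qed.
Lemma fin2 (K : realType) (e Op P0 Sm N a : K) : 0 <= e -> 0 <= Op -> 0 <= P0 -> 0 < N ->
  0 <= a -> a <= e ->
  N * (a * P0 + (1 - a) / 2 * Op) <= Sm -> (1 - e) / 2 * Op * N <= Sm.
Proof.
move=> e0 O0 P00 N0 a0 ae h; apply: le_trans h; rewrite mulrC; apply: ler_wpM2l; first exact: ltW.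
have := mulr_ge0 a0 P00; have : (e - a) * Op >= 0 by apply: mulr_ge0 => //; lra.
lra.
Qed.

Lemma final (O : {set T}) : (0 < l)%N -> (#|O| <= l)%N ->
  (forall S, S \in outputs k f chRep ord chM -> (#|S| <= l)%N) /\
  (1 - (expR 2)^-1) / 2 * Fobj k f O <= expectedF k f chRep ord chM.
Proof.
move=> lpos cO.
have HI : Inv set0 (fun _ => set0) by move=> i; rewrite sub0set cards0.
split.
  move=> S /mapP [X Xin ->]; apply: leq_trans (card_realpart X) _.
  by have := card_leaves Xin; rewrite cards0 add0n.
rewrite /expectedF /outputs big_map size_map size_leaves.
rewrite ler_pdivlMr; last by rewrite ltr0n expn_gt0 lpos.
have hm := @leaves_main O l 0 set0 (fun _ => set0) lpos cO HI (leqnn l).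
have hmono := @leaves_mono l 0 set0 (fun _ => set0) HI.
have Op0 := Fobj_ge0 O.
have P00 := Phi_ge0 (fun _ => set0).
have e0 : 0 <= (expR 2)^-1 :> R by rewrite invr_ge0 expR_ge0.
have N0 : 0 < (l ^ l)%:R :> R by rewrite ltr0n expn_gt0 lpos.
case: (leqP 2 l) => hl.
  have c0 : 0 <= cc by have := cc_ge0 (r := 1) hl; rewrite expr1.
  have cl : cc ^+ l <= (expR 2)^-1.
    have h1 : cc <= expR (- (2 / l%:R)) by rewrite /cc; exact: expR_ge1Dx.
    have h2 : 0 <= expR (- (2 / l%:R)) :> R by apply: expR_ge0.
    apply: le_trans (lerXn2r l (_ : cc \is Num.nneg) (_ : expR _ \is Num.nneg) h1) _.
    - by rewrite nnegrE.
    - by rewrite nnegrE.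
    rewrite -expRM_natr mulNr divfK ?expRN //.
    by rewrite pnatr_eq0 -lt0n.
  exact: fin2 e0 Op0 P00 N0 (exprn_ge0 l c0) cl hm.
have l1 : l = 1%N by lia.
have Nc : (l ^ l)%:R = 1 :> R by rewrite l1.
have cl : cc ^+ l = -1.
  rewrite /cc l1 expr1 divr1; lra.
rewrite Nc cl in hm; rewrite Nc in hmono *.
exact: fin1 e0 Op0 hm hmono.
Qed.

End Main.

Theorem mainTheorem5 (R : realType) (T : finType) (m k l : nat)
  (f : 'I_m -> {set T} -> R)
  (chRep : 'I_m -> (T + 'I_l)%type -> {set (T + 'I_l)%type} -> (T + 'I_l)%type)
  (ord : seq (T + 'I_l)%type)
  (chM : nat -> {set (T + 'I_l)%type} -> ('I_m -> {set (T + 'I_l)%type}) ->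
         {set (T + 'I_l)%type})
  (O : {set T}) :
  (0 < k)%N -> (0 < l)%N ->
  (forall i A, 0 <= f i A) ->
  (forall i (A B : {set T}), A \subset B -> f i A <= f i B) ->
  (forall i, submodular (f i)) ->
  (* ord is a fixed order of Omega' *)
  uniq ord -> (forall x : (T + 'I_l)%type, x \in ord) ->
  (* chRep picks some y* in argmax_{y in A} nabla_i(x,y,A) *)
  (forall (i : 'I_m) (x y : (T + 'I_l)%type) (A : {set (T + 'I_l)%type}), y \in A ->
     chRep i x A \in A /\
     nablaxy f i x y A <= nablaxy f i x (chRep i x A) A) ->
  (* chM picks a set M of exactly l items of Omega' maximizing the score *)
  (forall (t : nat) (S : {set (T + 'I_l)%type}) (Ts : 'I_m -> {set (T + 'I_l)%type}), #|chM t S Ts| = l /\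
     forall M : {set (T + 'I_l)%type}, #|M| = l ->
       score k f Ts M <= score k f Ts (chM t S Ts)) ->
  (* O in argmax_{|S'| <= l} F(S') *)
  (#|O| <= l)%N ->
  (forall S' : {set T}, (#|S'| <= l)%N -> Fobj k f S' <= Fobj k f O) ->
  (forall S, S \in outputs k f chRep ord chM -> (#|S| <= l)%N) /\
  expectedF k f chRep ord chM >= (1 - (expR 2)^-1) / 2 * Fobj k f O.
Proof.
move=> kp lp f0 fm fs _ _ hRep hM cO _.
exact: (final kp f0 fm fs ord hRep hM lp cO).
Qed.
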